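(* Let $\langle (x_n,y_n)\rangle_{n\in\mathbb{N}}$ be the solutions in $\mathbb{N}^2$ of $x^2-19\,y^2=1$, indexed so that $y_0<y_1<\cdots$ (so $39\mid y_k$ for every $k$). Let $n=2^m h$ with $m>0$ and $h$ odd. If $y_n/39$ is representable, then $y_h/39$ is representable.
   Context: $(x_0,y_0)=(1,0)$, $(x_1,y_1)=(170,39)$, $x_n+y_n\sqrt{19}=(170+39\sqrt{19})^n$. A non-negative integer $N$ is called representable if $N=w^2+w\,t+5\,t^2$ for some $w,t\in\mathbb{Z}$ (the norm form of the ring of integers $\mathbb{Z}[\tfrac{1+\sqrt{-19}}{2}]$). *)

(* Defs.v *)
From Stdlib Require Import ZArith.
Open Scope Z_scope.

(* (x_n, y_n) with x_n + y_n sqrt 19 = (170 + 39 sqrt 19)^n: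
   multiplying by 170 + 39 sqrt 19 gives
   x_{n+1} = 170 x_n + 741 y_n,  y_{n+1} = 39 x_n + 170 y_n  (741 = 19*39). *)
Fixpoint pell (n : nat) : Z * Z :=
  match n with
  | O => (1, 0)
  | S k => let (x, y) := pell k in (170 * x + 741 * y, 39 * x + 170 * y)
  end.

Definition pell_x (n : nat) : Z := fst (pell n).
Definition pell_y (n : nat) : Z := snd (pell n).

(* N is representable by the norm form w^2 + w t + 5 t^2 of Z[(1+sqrt(-19))/2]. *)
Definition representable (N : Z) : Prop :=
  0 <= N /\ exists w t : Z, N = w * w + w * t + 5 * t * t.

(* Main.v *)
Require Import Defs.
From Stdlib Require Import ZArith Znumtheory Lia Classical.
Open Scope Z_scope.

Definition f (w t : Z) := w * w + w * t + 5 * t * t.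

Lemma f4 w t : 4 * f w t = (2*w+t)*(2*w+t) + 19*t*t.
Proof. unfold f; ring. Qed.

Lemma f_mul a b c d : f a b * f c d = f (a*c - 5*b*d) (a*d + b*c + b*d).
Proof. unfold f; ring. Qed.

Lemma fp p a b : f (p*a) (p*b) = p*p * f a b.
Proof. unfold f; ring. Qed.

Lemma four M U T : 4 * M = U*U + 19*T*T -> exists w t, M = f w t.
Proof.
  intros H.
  pose proof (Z.div_mod U 2 ltac:(lia)) as HU.
  pose proof (Z.div_mod T 2 ltac:(lia)) as HT.
  set (q := U / 2) in *. set (i := U mod 2) in *.
  set (r := T / 2) in *. set (j := T mod 2) in *.
  assert (0 <= i < 2) by (apply Z.mod_pos_bound; lia).
  assert (0 <= j < 2) by (apply Z.mod_pos_bound; lia).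
  assert (Hi: i = 0 \/ i = 1) by lia. assert (Hj: j = 0 \/ j = 1) by lia.
  rewrite HU, HT in H. clearbody q i r j. clear HU HT.
  destruct Hi, Hj; subst.
  - exists (q - r), (2*r). unfold f. nia.
  - exfalso. assert (4*M = 2*(2*q*q + 38*r*r+38*r+9) + 1) by nia. lia.
  - exfalso. assert (4*M = 2*(2*q*q+2*q + 38*r*r) + 1) by nia. lia.
  - exists (q - r), (2*r+1). unfold f. nia.
Qed.

Lemma half a b : a = 2*b -> a/2 = b.
Proof. intros ->. rewrite Z.mul_comm; apply Z.div_mul; lia. Qed.

Lemma sixteen M X Y : 16 * M = X*X + 19*Y*Y -> 4*M = (X/2)*(X/2) + 19*(Y/2)*(Y/2).
Proof.
  intros H.
  pose proof (Z.div_mod X 4 ltac:(lia)) as HU.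
  pose proof (Z.div_mod Y 4 ltac:(lia)) as HT.
  set (q := X / 4) in *. set (i := X mod 4) in *.
  set (r := Y / 4) in *. set (j := Y mod 4) in *.
  assert (0 <= i < 4) by (apply Z.mod_pos_bound; lia).
  assert (0 <= j < 4) by (apply Z.mod_pos_bound; lia).
  rewrite HU, HT in *. clearbody q i r j. clear HU HT.
  assert (E: 16*M = 8*(2*q*q+q*i+38*r*r+19*r*j) + (i*i+19*j*j)) by nia.
  assert (Hi: i = 0 \/ i = 1 \/ i = 2 \/ i = 3) by lia.
  assert (Hj: j = 0 \/ j = 1 \/ j = 2 \/ j = 3) by lia.
  destruct Hi as [|[|[|]]], Hj as [|[|[|]]]; subst; simpl in E; try lia.
  all: try rewrite (half (4*q+0) (2*q)) by ring; try rewrite (half (4*q+2) (2*q+1)) by ring;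
    try rewrite (half (4*r+0) (2*r)) by ring; try rewrite (half (4*r+2) (2*r+1)) by ring; nia.
Qed.

Lemma redD : forall n : nat, forall a b c, 0 < a -> (Z.to_nat a <= n)%nat ->
  b*b - 4*a*c = -19 -> forall x y, exists w t, a*x*x + b*x*y + c*y*y = f w t.
Proof.
  induction n as [|n IH]; intros a b c Ha Hn Hd x y.
  - lia.
  - set (k := (b + a) / (2*a)).
    pose proof (Z.div_mod (b+a) (2*a) ltac:(lia)) as Hk.
    pose proof (Z.mod_pos_bound (b+a) (2*a) ltac:(lia)) as Hr.
    fold k in Hk. set (rr := (b+a) mod (2*a)) in *. clearbody k rr.
    set (b' := b - 2*k*a). set (c' := c - k*b + k*k*a).
    assert (Hd' : b'*b' - 4*a*c' = -19) by (subst b' c'; nia).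
    assert (Hb' : -a <= b' < a) by (subst b'; nia).
    assert (Hv : forall X Y, a*X*X + b*X*Y + c*Y*Y = a*(X+k*Y)*(X+k*Y) + b'*(X+k*Y)*Y + c'*Y*Y)
      by (intros; subst b' c'; ring).
    rewrite Hv. clearbody b' c'.
    assert (Hc'pos : 0 < c') by nia.
    destruct (Z_lt_le_dec c' a) as [Hlt|Hge].
    + destruct (IH c' (-b') a Hc'pos ltac:(lia) ltac:(nia) y (-(x+k*y))) as [w [t Hwt]].
      exists w, t. rewrite <- Hwt. ring.
    + assert (a <= 2) by nia.
      assert (a = 1) by (assert (a = 1 \/ a = 2) as [->| ->] by lia; [lia| assert (b' = -2 \/ b' = -1 \/ b' = 0 \/ b' = 1) as [->|[->|[->| ->]]] by lia; lia]).
      subst a.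
      assert (b' = -1) by (assert (b' = -1 \/ b' = 0) as [->| ->] by lia; lia).
      subst b'. assert (c' = 5) by lia. subst c'.
      exists (x + k*y), (-y). unfold f. ring.
Qed.

Lemma prime19 : prime 19.
Proof.
  apply prime_intro; [lia|]. intros n Hn. apply Zgcd_1_rel_prime.
  assert (n = 1 \/ n = 2 \/ n = 3 \/ n = 4 \/ n = 5 \/ n = 6 \/ n = 7 \/ n = 8 \/ n = 9 \/ n = 10
    \/ n = 11 \/ n = 12 \/ n = 13 \/ n = 14 \/ n = 15 \/ n = 16 \/ n = 17 \/ n = 18) by lia.
  repeat (destruct H as [->|H]; [reflexivity|]). subst; reflexivity.
Qed.

Lemma xy p M X Y : prime p -> 16*p*p*M = X*X+19*Y*Y -> (p|Y) -> exists w t, M = f w t.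
Proof.
  intros Hp E [Y1 ->].
  assert (Hp2 := prime_ge_2 p Hp).
  assert (HX : (p | X*X)).
  { exists (16*p*M - 19*Y1*Y1*p). nia. }
  destruct (prime_mult p Hp X X HX) as [[X1 ->]|[X1 ->]];
  (assert (E2 : 16*M = X1*X1 + 19*Y1*Y1) by
    (apply (Z.mul_cancel_l _ _ (p*p)); [nia|]; nia));
  apply sixteen in E2; eapply four; exact E2.
Qed.

Lemma split p w t : prime p -> (exists a b, p = f a b) -> (p | f w t) ->
  exists w' t', f w t = p * f w' t'.
Proof.
  intros Hp [a [b Hab]] [M HM].
  assert (Hp2 := prime_ge_2 p Hp).
  set (u := 2*w+t) in *. set (U := 2*a+b).
  assert (HN : 4 * f w t = u*u + 19*t*t) by (subst u; apply f4).
  assert (HP : 4 * p = U*U + 19*b*b) by (subst U; rewrite Hab; apply f4).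
  clearbody u U.
  assert (Hd : (p | 19*(U*t - u*b)*(U*t+u*b))).
  { exists (U*U*4*M - u*u*4). nia. }
  destruct (prime_mult p Hp _ _ Hd) as [Hd1|Hd1].
  - destruct (prime_mult p Hp _ _ Hd1) as [H19|Hd2].
    + assert (p = 19) by (apply prime_div_prime; auto; exact prime19). subst p.
      assert (Hu : (19 | u*u)) by (exists (4*M - t*t); nia).
      destruct (prime_mult 19 prime19 u u Hu) as [[v ->]|[v ->]];
      (destruct (four M t v ltac:(nia)) as [w' [t' ->]]; exists w', t'; nia).
    + destruct (xy p M (u*U + 19*t*b) (u*b - U*t) Hp ltac:(nia)) as [w' [t' ->]].
      { destruct Hd2 as [k Hk]. exists (-k). lia. }
      exists w', t'. lia.
  - destruct (xy p M (u*U - 19*t*b) (u*b + U*t) Hp ltac:(nia)) as [w' [t' ->]].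
    { destruct Hd1 as [k Hk]. exists k. lia. }
    exists w', t'. lia.
Qed.

Lemma inert p w t : prime p -> ~ (exists a b, p = f a b) -> (p | f w t) -> (p | w) /\ (p | t).
Proof.
  intros Hp Hnr Hd.
  assert (Hp2 := prime_ge_2 p Hp).
  destruct (Zdivide_dec p t) as [Ht|Ht].
  - split; [|exact Ht].
    assert (Hw : (p | w*w)).
    { replace (w*w) with (f w t - t*(w + 5*t)) by (unfold f; ring).
      apply Z.divide_sub_r; [exact Hd|]. apply Z.divide_mul_l; exact Ht. }
    destruct (prime_mult p Hp w w Hw); assumption.
  - exfalso.
    destruct (Z.Even_or_Odd p) as [[m Hm]|[m Hm]].
    + assert (p = 2) by (symmetry; apply prime_div_prime; [exact prime_2|exact Hp|exists m; lia]).
      subst p. apply Ht.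
      destruct Hd as [k Hk].
      destruct (Z.Even_or_Odd t) as [[r Hr]|[r Hr]]; [exists r; lia|].
      destruct (Z.Even_or_Odd w) as [[q Hq]|[q Hq]]; subst; unfold f in Hk; exfalso.
      * assert (2*k = 2*(2*q*q+2*q*r+q+10*r*r+10*r+2)+1) by nia. lia.
      * assert (2*k = 2*(2*q*q+2*q*r+3*q+r+10*r*r+10*r+3)+1) by nia. lia.
    + assert (Hrp := prime_rel_prime p Hp t Ht).
      destruct (rel_prime_bezout _ _ Hrp) as [u v Huv].
      set (s := (2*w+t)*v).
      assert (Hs : (p | s*s + 19)).
      { assert (E : s*s+19 = v*v*(4*f w t) + 19*(1 - v*t)*(1+v*t)) by (subst s; unfold f; ring).
        replace (1 - v*t) with (u*p) in E by lia. rewrite E.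
        apply Z.divide_add_r.
        - apply Z.divide_mul_r, Z.divide_mul_r; exact Hd.
        - exists (19*u*(1+v*t)). ring. }
      assert (Hb : exists b, (p | b*b+19) /\ exists j, b = 2*j+1).
      { destruct (Z.Even_or_Odd s) as [[j Hj]|[j Hj]].
        - exists (s+p). split.
          + replace ((s+p)*(s+p)+19) with ((s*s+19) + p*(2*s+p)) by ring.
            apply Z.divide_add_r; [exact Hs|]. exists (2*s+p). ring.
          + exists (j+m). lia.
        - exists s. split; [exact Hs|]. exists j; exact Hj. }
      destruct Hb as [b [Hb [j Hj]]].
      replace (b*b+19) with (4*(j*j+j+5)) in Hb by (subst; ring).
      assert (Hk : (p | j*j+j+5)).
      { destruct (prime_mult p Hp _ _ Hb) as [H4|H4]; [|exact H4].
        exfalso. replace 4 with (2*2) in H4 by ring.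
        destruct (prime_mult p Hp _ _ H4) as [H2|H2];
        assert (p = 2) by (apply prime_div_prime; [exact Hp|exact prime_2|exact H2]); lia. }
      destruct Hk as [c Hc].
      destruct (redD (Z.to_nat p) p b c ltac:(lia) ltac:(lia) ltac:(nia) 1 0) as [w' [t' E]].
      apply Hnr. exists w', t'. rewrite <- E. ring.
Qed.

Lemma prime_divisor : forall n : nat, forall a, 1 < a -> (Z.to_nat a <= n)%nat -> exists p, prime p /\ (p | a).
Proof.
  induction n as [|n IH]; intros a Ha Hn; [lia|].
  destruct (prime_dec a) as [Hp|Hp]; [exists a; split; [exact Hp| exists 1; ring]|].
  destruct (not_prime_divide a Ha Hp) as [d [Hd Hda]].
  destruct (IH d ltac:(lia) ltac:(lia)) as [p [Hpp Hpd]].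
  exists p. split; [exact Hpp|]. eapply Z.divide_trans; eauto.
Qed.

Lemma descent : forall n : nat, forall A B, 0 < A -> (Z.to_nat A <= n)%nat -> rel_prime A B ->
  (exists w t, A * B = f w t) -> exists w t, A = f w t.
Proof.
  induction n as [|n IH]; intros A B HA Hn Hr [w [t Hwt]]; [lia|].
  destruct (Z.eq_dec A 1) as [->|HA1]; [exists 1, 0; reflexivity|].
  destruct (prime_divisor (Z.to_nat A) A ltac:(lia) ltac:(lia)) as [p [Hp [A1 HA1p]]].
  assert (Hp2 := prime_ge_2 p Hp).
  assert (HA1pos : 0 < A1) by nia. assert (A1 < A) by nia.
  assert (HpB : ~ (p | B)).
  { intros HB. destruct Hr as [_ _ Hg].
    assert (H1 : (p | 1)) by (apply Hg; [exists A1; lia|exact HB]).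
    apply Z.divide_pos_le in H1; lia. }
  destruct (classic (exists a b, p = f a b)) as [Hrep|Hnrep].
  - destruct (split p w t Hp Hrep) as [w' [t' E]].
    { rewrite <- Hwt. exists (A1*B). lia. }
    assert (HA1n : (Z.to_nat A1 <= n)%nat) by lia.
    assert (HA1d : (A1 | A)) by (exists p; lia).
    destruct (IH A1 B HA1pos HA1n (rel_prime_div _ _ _ Hr HA1d)) as [a1 [b1 Ha1]].
    { exists w', t'. apply (Z.mul_cancel_l _ _ p); [lia|]. rewrite <- E, <- Hwt, HA1p. ring. }
    destruct Hrep as [a [b Hab]].
    rewrite HA1p, Ha1, Hab, Z.mul_comm, f_mul. eauto.
  - destruct (inert p w t Hp Hnrep) as [[w1 ->] [t1 ->]].
    { rewrite <- Hwt. exists (A1*B). lia. }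
    rewrite (Z.mul_comm w1 p), (Z.mul_comm t1 p), fp in Hwt.
    assert (Hd : (p | A1 * B)) by (exists (f w1 t1); nia).
    destruct (prime_mult p Hp _ _ Hd) as [[A2 HA2]|HB]; [|contradiction].
    assert (HA2p : 0 < A2) by nia. assert (A2 < A) by nia.
    assert (HA2n : (Z.to_nat A2 <= n)%nat) by lia.
    assert (HA2d : (A2 | A)) by (exists (p*p); lia).
    destruct (IH A2 B HA2p HA2n (rel_prime_div _ _ _ Hr HA2d)) as [a2 [b2 Ha2]].
    { exists w1, t1. apply (Z.mul_cancel_l _ _ (p*p)); [nia|]. rewrite <- Hwt, HA1p, HA2. ring. }
    exists (p*a2), (p*b2). rewrite fp, <- Ha2, HA1p, HA2. ring.
Qed.

Lemma pell_S n : pell_x (S n) = 170 * pell_x n + 741 * pell_y n /\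
                 pell_y (S n) = 39 * pell_x n + 170 * pell_y n.
Proof. unfold pell_x, pell_y; simpl; destruct (pell n); simpl; auto. Qed.

Lemma pell_0 : pell_x 0 = 1 /\ pell_y 0 = 0.
Proof. split; reflexivity. Qed.

Lemma pell_add a b : pell_x (a + b) = pell_x a * pell_x b + 19 * pell_y a * pell_y b /\
                     pell_y (a + b) = pell_x a * pell_y b + pell_y a * pell_x b.
Proof.
  induction a as [|a IH]; cbn [Nat.add].
  - change (pell_x 0) with 1; change (pell_y 0) with 0. split; ring.
  - destruct (pell_S (a+b)) as [E1 E2]. destruct (pell_S a) as [F1 F2].
    rewrite E1, E2, F1, F2, (proj1 IH), (proj2 IH). split; ring.
Qed.

Lemma pell_norm n : pell_x n * pell_x n - 19 * pell_y n * pell_y n = 1.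
Proof.
  induction n as [|n IH]; [reflexivity|].
  destruct (pell_S n) as [E1 E2]. rewrite E1, E2. nia.
Qed.

Lemma pell_pos n : 1 <= pell_x n /\ 0 <= pell_y n.
Proof.
  induction n as [|n IH]; [split; cbv; discriminate|].
  destruct (pell_S n) as [E1 E2]. rewrite E1, E2. lia.
Qed.

Lemma pell_ypos n : (1 <= n)%nat -> 39 <= pell_y n.
Proof.
  destruct n; [lia|]. intros _. destruct (pell_S n) as [_ E2]. rewrite E2.
  pose proof (pell_pos n). lia.
Qed.

Lemma pell_39 n : (39 | pell_y n).
Proof.
  induction n as [|n [k Hk]]; [exists 0; reflexivity|].
  destruct (pell_S n) as [_ E2]. rewrite E2, Hk. exists (pell_x n + 170*k). ring.
Qed.

Lemma pell_odd n : Z.odd (pell_y n) = Nat.odd n /\ Z.odd (pell_x n) = negb (Nat.odd n).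
Proof.
  induction n as [|n IH]; [split; reflexivity|].
  destruct (pell_S n) as [E1 E2]. rewrite E1, E2.
  rewrite !Z.odd_add, !Z.odd_mul. simpl. rewrite Nat.odd_succ, <- Nat.negb_odd.
  destruct IH as [-> ->]. destruct (Nat.odd n); split; reflexivity.
Qed.

Lemma decomp h : Nat.odd h = true -> forall m, exists K,
  pell_y (2 ^ m * h) = pell_y h * K /\ rel_prime (pell_y h) K.
Proof.
  intros Hh. induction m as [|m [K [HK Hr]]].
  - exists 1. simpl. rewrite Nat.add_0_r. split; [ring|].
    apply bezout_rel_prime. exists 0 1. ring.
  - set (n := (2^m*h)%nat) in *.
    replace (2 ^ S m * h)%nat with (n + n)%nat by (subst n; simpl; lia).
    exists (2 * pell_x n * K). split.
    + rewrite (proj2 (pell_add n n)), HK. ring.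
    + apply rel_prime_mult; [apply rel_prime_mult|exact Hr].
      * apply bezout_rel_prime.
        pose proof (proj1 (pell_odd h)) as Ho. rewrite Hh in Ho.
        destruct (Z.Even_or_Odd (pell_y h)) as [[q Hq]|[q Hq]].
        -- rewrite Hq, Z.odd_mul in Ho. discriminate.
        -- exists 1 (-q). lia.
      * apply bezout_rel_prime. exists (-19 * K * pell_y n) (pell_x n).
        pose proof (pell_norm n). rewrite HK at 1. nia.
Qed.

Theorem lemma3 (m h : nat) (hm : (0 < m)%nat) (hh : Nat.odd h = true) :
  representable (pell_y (2 ^ m * h)%nat / 39) ->
  representable (pell_y h / 39).
Proof.
  intros [_ [w [t Hwt]]].
  destruct (decomp h hh m) as [K [HK Hr]].
  destruct (pell_39 h) as [j Hj].
  assert (Hh1 : (1 <= h)%nat) by (destruct h; [discriminate|lia]).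
  pose proof (pell_ypos h Hh1) as Hy.
  assert (Hjpos : 0 < j) by lia.
  rewrite HK, Hj in Hwt.
  replace (j * 39 * K) with ((j*K)*39) in Hwt by ring.
  rewrite Z.div_mul in Hwt by lia.
  rewrite Hj, Z.div_mul by lia.
  assert (Hr' : rel_prime j K) by (apply (rel_prime_div _ _ _ Hr); exists 39; lia).
  destruct (descent (Z.to_nat j) j K Hjpos (le_n _) Hr' ltac:(exists w, t; exact Hwt)) as [a [b Hab]].
  split; [lia|]. exists a, b. exact Hab.
Qed.
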